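(* Let $l,m$ be positive integers with $m>l\ge5$ and $m>\mathcal{L}$, let $\boldsymbol\sigma\in\mathrm{ir}(l)$, let $t$ be a positive integer with $2^t\le M$, let $\zeta:\mathbb{F}_{2^t}\to\mathcal{B}^m_{\boldsymbol\sigma}$ be injective, let $N=2^t-1$, and let $C\subseteq\mathbb{F}_{2^t}^N$ be an MDS code of length $N$, dimension $N-4$ and minimum Hamming distance $5$. Let $$\mathcal{C}_{MDS}=\{\zeta(c_1)\boldsymbol\sigma\zeta(c_2)\boldsymbol\sigma\cdots\boldsymbol\sigma\zeta(c_N):\ (c_1,\dots,c_N)\in C\}.$$ Then $\mathcal{C}_{MDS}$ corrects any number of $\le3$-TDs and at most one substitution: for any two distinct $\mathbf{c}_1,\mathbf{c}_2\in\mathcal{C}_{MDS}$ we have $D^{*,\le1}(\mathbf{c}_1)\cap D^{*,\le1}(\mathbf{c}_2)=\varnothing$; indeed every codeword $\mathbf{x}$ can be recovered from $R(\mathbf{y})$ for any $\mathbf{y}\in D^{*,\le1}(\mathbf{x})$.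
   Context: $\Sigma_q=\{0,\dots,q-1\}$, $q\ge3$. A tandem duplication of length $k$ transforms $\mathbf{u}\mathbf{v}\mathbf{w}$ with $|\mathbf{v}|=k$ into $\mathbf{u}\mathbf{v}\mathbf{v}\mathbf{w}$; a $\le3$-TD is one of length $1,2$ or $3$. $D^*(\mathbf{x})$ is the set of strings obtainable from $\mathbf{x}$ by finitely many (possibly zero) $\le3$-TDs. A string is irreducible if it has no substring $\mathbf{a}\mathbf{a}$ with $1\le|\mathbf{a}|\le3$; $\mathrm{ir}(n)$ is the set of irreducible strings of length $n$. $R(\mathbf{x})$ denotes the unique irreducible $\mathbf{r}$ with $\mathbf{x}\in D^*(\mathbf{r})$. A substitution replaces one symbol by a different symbol of $\Sigma_q$. $D^{*,1}(\mathbf{x})$ is the set of strings obtainable from $\mathbf{x}$ by any number of $\le3$-TDs and exactly one substitution in any order, and $D^{*,\le1}(\mathbf{x})=D^*(\mathbf{x})\cup D^{*,1}(\mathbf{x})$. $\mathcal{L}$ is the smallest integer such that for every alphabet, every $\mathbf{x}$ and every $\mathbf{x}''\in D^{*,1}(\mathbf{x})$, $R(\mathbf{x}'')$ can be obtained from $R(\mathbf{x})$ by deleting a substring of length at most $\mathcal{L}$ and inserting a substring of length at most $\mathcal{L}$ in the same position (it is known that $\mathcal{L}\le17$). For $\boldsymbol\sigma\in\mathrm{ir}(l)$, $\mathcal{B}^m_{\boldsymbol\sigma}$ denotes the set of strings $B\in\Sigma_q^m$ such that $\boldsymbol\sigma B\boldsymbol\sigma\in\mathrm{ir}(m+2l)$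 and $\boldsymbol\sigma B\boldsymbol\sigma$ contains exactly two occurrences of $\boldsymbol\sigma$ as a substring; $M=M^{(m)}_{\boldsymbol\sigma}=|\mathcal{B}^m_{\boldsymbol\sigma}|$. *)

(* Defs.v *)
From HB Require Import structures.
From mathcomp Require Import all_boot all_order all_algebra vector.
From mathcomp Require Import boolp.
Set Implicit Arguments. Unset Strict Implicit. Unset Printing Implicit Defensive.

Section Strings.
Variable T : eqType.

Definition td (x y : seq T) : Prop :=
  exists u v w : seq T, 1 <= size v <= 3 /\ x = u ++ v ++ w /\ y = u ++ v ++ v ++ w.

Inductive Dstar (x : seq T) : seq T -> Prop :=
| Dstar_refl : Dstar x x
| Dstar_step y z : Dstar x y -> td y z -> Dstar x z.

Definition irreducible (s : seq T) : Prop :=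
  ~ exists u a w : seq T, 1 <= size a <= 3 /\ s = u ++ a ++ a ++ w.

(* r is the (known to be unique) irreducible root R(x) of x *)
Definition is_root (r x : seq T) : Prop := irreducible r /\ Dstar r x.

Definition subst1 (x y : seq T) : Prop :=
  exists (u w : seq T) (a b : T), a != b /\ x = u ++ a :: w /\ y = u ++ b :: w.

Definition Dstar1 (x y : seq T) : Prop :=
  exists a b, Dstar x a /\ subst1 a b /\ Dstar b y.

Definition Dstar_le1 (x y : seq T) : Prop := Dstar x y \/ Dstar1 x y.

Definition occ (sigma s : seq T) : nat :=
  count (fun i => take (size sigma) (drop i s) == sigma) (iota 0 (size s - size sigma).+1).

End Strings.

Definition L_prop (L : nat) : Prop :=
  forall (q : nat) (x x'' : seq 'I_q), Dstar1 x x'' ->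
  forall r r'', is_root r x -> is_root r'' x'' ->
  exists u v w z : seq 'I_q,
    r = u ++ v ++ w /\ r'' = u ++ z ++ w /\ size v <= L /\ size z <= L.

Definition is_Lcal (L : nat) : Prop := L_prop L /\ forall L', L_prop L' -> L <= L'.

Definition inB (q : nat) (sigma : seq 'I_q) (m : nat) (B : m.-tuple 'I_q) : Prop :=
  irreducible (sigma ++ tval B ++ sigma) /\ occ sigma (sigma ++ tval B ++ sigma) = 2.

Definition inBb (q : nat) (sigma : seq 'I_q) (m : nat) (B : m.-tuple 'I_q) : bool :=
  `[< inB sigma B >].

Definition Mcard (q : nat) (sigma : seq 'I_q) (m : nat) : nat :=
  #|[set B : m.-tuple 'I_q | inBb sigma B]|.

Definition concat_sep (T : Type) (sep : seq T) (l : seq (seq T)) : seq T :=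
  match l with
  | [::] => [::]
  | b :: l' => b ++ flatten [seq sep ++ b' | b' <- l']
  end.

Definition hamming (F : eqType) (N : nat) (c d : 'rV[F]_N) : nat :=
  #|[set i : 'I_N | c ord0 i != d ord0 i]|.

Definition CMDS (q : nat) (sigma : seq 'I_q) (m : nat) (F : finFieldType) (N : nat)
  (zeta : F -> m.-tuple 'I_q) (C : {vspace 'rV[F]_N}) (x : seq 'I_q) : Prop :=
  exists2 c : 'rV[F]_N, c \in C &
    x = concat_sep sigma [seq tval (zeta (c ord0 i)) | i <- enum 'I_N].

(* Main.v *)
Require Import Defs.
From HB Require Import structures.
From mathcomp Require Import all_boot all_order all_algebra vector.
From mathcomp Require Import zify.
From Stdlib Require Import Classical.
Set Implicit Arguments. Unset Strict Implicit. Unset Printing Implicit Defensive.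


Section Gen.
Variable T : eqType.
Implicit Types x y s t u w : seq T.

Lemma Dstar_trans x y z : Dstar x y -> Dstar y z -> Dstar x z.
Proof. move=> H1 H2; elim: H2 => // y' z' _ IH Htd; exact: Dstar_step IH Htd. Qed.

Lemma nth_catR (x0 : T) s1 s2 k : nth x0 (s1 ++ s2) (size s1 + k) = nth x0 s2 k.
Proof. by rewrite nth_cat ltnNge leq_addr /= addKn. Qed.

Lemma take_drop_eq (x0 : T) y t o :
  o + size t <= size y -> (forall k, k < size t -> nth x0 y (o + k) = nth x0 t k) ->
  take (size t) (drop o y) = t.
Proof.
move=> Hs Hn; apply: (@eq_from_nth _ x0).
  rewrite size_take size_drop; case: ifP => Hc; lia.
move=> k; rewrite size_take size_drop => Hk.
have Hk' : k < size t by move: Hk; case: ifP => Hc; lia.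
by rewrite nth_take // nth_drop Hn.
Qed.

Lemma sub_split (x0 : T) y t o :
  o + size t <= size y -> (forall k, k < size t -> nth x0 y (o + k) = nth x0 t k) ->
  y = take o y ++ t ++ drop (o + size t) y.
Proof.
move=> Hs Hn; have Ht := take_drop_eq Hs Hn.
by rewrite -{1}(cat_take_drop o y) -{1}(cat_take_drop (size t) (drop o y)) Ht drop_drop addnC.
Qed.

Lemma root_exists y : exists r, is_root r y.
Proof.
have [n Hn] : exists n, size y < n by exists (size y).+1.
elim: n y Hn => [|n IH] y Hy; first by [].
case: (classic (irreducible y)) => Hirr.
  by exists y; split => //; apply: Dstar_refl.
have [u [a [w [Ha Hy']]]] := NNPP _ Hirr.
have Hs : size (u ++ a ++ w) < n by move: Hy; rewrite Hy' !size_cat; lia.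
have [r [Hr1 Hr2]] := IH _ Hs.
exists r; split => //; apply: Dstar_step Hr2 _.
by exists u, a, w; split.
Qed.

Definition nc s := exists a b, [/\ a \in s, b \in s & a != b].

Lemma nc_td x y : td x y -> nc x -> nc y.
Proof.
move=> [u [v [w [_ [-> ->]]]]] [a [b [Ha Hb Hab]]]; exists a, b; split => //.
  by move: Ha; rewrite !mem_cat => /or3P [] ->; rewrite ?orbT.
by move: Hb; rewrite !mem_cat => /or3P [] ->; rewrite ?orbT.
Qed.

Lemma nc_Dstar x y : Dstar x y -> nc x -> nc y.
Proof. by elim=> // y' z' _ IH Htd /IH; apply: nc_td. Qed.

Lemma nc_adj y : nc y -> exists u b a w, b != a /\ y = u ++ b :: a :: w.
Proof.
elim: y => [|c y IH]; first by case=> a [b [Ha]].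
case: y IH => [|d y] IH.
  by case=> a [b []]; rewrite !inE => /eqP -> /eqP ->; rewrite eqxx.
case: (eqVneq c d) => [Ecd|Hcd]; last by move=> _; exists [::], c, d, y.
subst d => Hnc.
have : nc (c :: y).
  case: Hnc => a [b [Ha Hb Hab]]; exists a, b; split => //.
    by move: Ha; rewrite inE; case/orP => // /eqP ->; rewrite inE eqxx.
  by move: Hb; rewrite inE; case/orP => // /eqP ->; rewrite inE eqxx.
case/IH => u [b [a [w [Hba ->]]]]; by exists (c :: u), b, a, w.
Qed.

End Gen.


Section CW.
Variables (T : eqType) (x0 : T) (sigma : seq T) (m l : nat).
Hypothesis Hsl : size sigma = l.

Lemma concat_cons2 b b' bs :
  concat_sep sigma [:: b, b' & bs] = b ++ sigma ++ concat_sep sigma (b' :: bs).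
Proof. by rewrite /= -catA. Qed.

Lemma concat_facts (bs : seq (seq T)) : all (fun b => size b == m) bs -> 0 < size bs ->
  [/\ size (concat_sep sigma bs) = size bs * (m + l) - l,
      forall i j, i < size bs -> j < m ->
        nth x0 (concat_sep sigma bs) (i * (m+l) + j) = nth x0 (nth [::] bs i) j
    & forall i j, i.+1 < size bs -> j < l ->
        nth x0 (concat_sep sigma bs) (i * (m+l) + m + j) = nth x0 sigma j].
Proof.
elim: bs => [|b bs IH] // /andP [/eqP Hb Hall] _.
case: bs IH Hall => [|b' bs] IH Hall.
  rewrite /= cats0; split.
  - rewrite Hb; lia.
  - by case.
  - by [].
have [IH1 IH2 IH3] := IH Hall isT.
rewrite concat_cons2; split.
- rewrite size_cat size_cat IH1 Hb Hsl /=. have : 0 < size bs + 1 by lia. nia.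
- case=> [|i] j Hi Hj.
    by rewrite mul0n add0n nth_cat Hb Hj.
  have -> : i.+1 * (m + l) + j = size b + (size sigma + (i * (m+l) + j)).
    rewrite Hb Hsl; nia.
  by rewrite !nth_catR IH2.
- case=> [|i] j Hi Hj.
    rewrite mul0n add0n -Hb nth_catR nth_cat Hsl Hj //.
  have -> : i.+1 * (m + l) + m + j = size b + (size sigma + (i * (m+l) + m + j)).
    rewrite Hb Hsl; nia.
  by rewrite !nth_catR IH3.
Qed.

End CW.


Section CW2.
Variables (T : eqType) (x0 : T) (sigma : seq T) (m l : nat).
Hypothesis Hsl : size sigma = l.
Hypothesis Hl5 : 5 <= l.
Hypothesis Hlm : l < m.

Definition cwP (x : seq T) (bs : seq (seq T)) (N : nat) :=
  [/\ x = concat_sep sigma bs, size bs = N, all (fun b => size b == m) bs &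
      forall b, b \in bs -> irreducible (sigma ++ b ++ sigma) /\ occ sigma (sigma ++ b ++ sigma) = 2].

Section OneCW.
Variables (x : seq T) (bs : seq (seq T)) (N : nat).
Hypothesis Hcw : cwP x bs N.
Hypothesis HN : 0 < N.

Lemma cw_facts :
  [/\ size x = N * (m + l) - l,
      forall i j, i < N -> j < m ->
        nth x0 x (i * (m+l) + j) = nth x0 (nth [::] bs i) j
    & forall i j, i.+1 < N -> j < l ->
        nth x0 x (i * (m+l) + m + j) = nth x0 sigma j].
Proof.
case: Hcw => -> Hs Hall _.
rewrite -Hs.
have HN' : 0 < size bs by rewrite Hs.
by have := concat_facts x0 Hsl Hall HN'.
Qed.

Lemma cw_bsize i : i < N -> size (nth [::] bs i) = m.
Proof.
case: Hcw => _ Hs Hall _ Hi; apply/eqP; apply: (allP Hall); apply: mem_nth; by rewrite Hs.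
Qed.

Lemma cw_bprop i : i < N -> irreducible (sigma ++ nth [::] bs i ++ sigma) /\
   occ sigma (sigma ++ nth [::] bs i ++ sigma) = 2.
Proof.
case: Hcw => _ Hs _ H Hi; apply: H; apply: mem_nth; by rewrite Hs.
Qed.

Lemma cw_LW i p : i < N -> p < size x -> i * (m+l) <= p + l -> p + l < i * (m+l) + m + 2 * l ->
  nth x0 x p = nth x0 (sigma ++ nth [::] bs i ++ sigma) (p + l - i * (m+l)).
Proof.
have [Hsz Hblk Hsep] := cw_facts.
move=> Hi Hp H1 H2; have Hb := cw_bsize Hi.
case: (ltnP p (i * (m+l))) => H3.
  case: i Hi H1 H2 H3 Hb => [|i] Hi H1 H2 H3 Hb; first lia.
  have E : p = i * (m+l) + m + (p + l - i.+1 * (m+l)) by nia.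
  rewrite {1}E Hsep; last 2 first.
  - rewrite Hsz in Hp; nia.
  - nia.
  rewrite nth_cat Hsl ifT //; nia.
case: (ltnP p (i * (m+l) + m)) => H4.
  have E : p = i * (m+l) + (p - i * (m+l)) by lia.
  rewrite {1}E Hblk; [|lia|lia].
  have -> : p + l - i * (m + l) = size sigma + (p - i * (m+l)) by lia.
  by rewrite nth_catR nth_cat Hb ifT //; lia.
have E : p = i * (m+l) + m + (p - i * (m+l) - m) by lia.
rewrite {1}E Hsep; last 2 first.
- rewrite Hsz in Hp; nia.
- lia.
have -> : p + l - i * (m + l) = size sigma + (size (nth [::] bs i) + (p - i * (m+l) - m)).
  rewrite Hsl Hb; lia.
by rewrite !nth_catR.
Qed.

End OneCW.

Lemma occ_third b o : size b = m -> occ sigma (sigma ++ b ++ sigma) = 2 ->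
  o <= l + m -> o != 0 -> o != l + m ->
  (forall k, k < l -> nth x0 (sigma ++ b ++ sigma) (o + k) = nth x0 sigma k) -> False.
Proof.
move=> Hb Hocc Ho1 Ho2 Ho3 Hn.
set S := sigma ++ b ++ sigma.
have HS : size S = l + m + l by rewrite /S !size_cat Hsl Hb; lia.
set P := fun i => take (size sigma) (drop i S) == sigma.
have P0 : P 0 by rewrite /P drop0 /S (@take_size_cat _ (size sigma)).
have Plm : P (l + m).
  rewrite /P /S catA (@drop_size_cat _ (l+m)) ?take_size // size_cat Hsl Hb; lia.
have Po : P o.
  rewrite /P; apply/eqP; apply: (@take_drop_eq _ x0 S sigma o); first by rewrite HS Hsl; lia.
  by rewrite Hsl.
move: Hocc; rewrite /occ -/S -/P HS Hsl.
have -> : l + m + l - l = l + m by lia.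
rewrite -size_filter => Hc.
have : size [:: 0; o; l + m] <= size (filter P (iota 0 (l + m).+1)).
  apply: uniq_leq_size.
    rewrite /= !inE negb_or eq_sym Ho2 /= eq_sym Ho3 /=; apply/eqP; lia.
  move=> z; rewrite !inE mem_filter mem_iota => /or3P [] /eqP ->.
  - by rewrite P0; lia.
  - by rewrite Po; lia.
  - by rewrite Plm; lia.
by rewrite Hc.
Qed.

End CW2.


Lemma lt_mulK a b K : a * K < b * K -> a < b.
Proof. by move=> H; rewrite ltnNge; apply/negP => /(leq_mul (leqnn K)) Hc; move: H; rewrite mulnC [b * _]mulnC ltnNge Hc. Qed.

Section CW3.
Variables (T : eqType) (x0 : T) (sigma : seq T) (m l : nat).
Hypothesis Hsl : size sigma = l.
Hypothesis Hl5 : 5 <= l.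
Hypothesis Hlm : l < m.
Variables (x : seq T) (bs : seq (seq T)) (N : nat).
Hypothesis Hcw : cwP sigma m x bs N.
Hypothesis HN : 0 < N.

Lemma occ_pos p : p + l <= size x -> (forall k, k < l -> nth x0 x (p + k) = nth x0 sigma k) ->
  exists i, p = i * (m + l) + m.
Proof.
move=> Hp Hk.
have [Hsz _ _] := cw_facts x0 Hsl Hcw HN.
have HK : 0 < m + l by lia.
have Ediv := divn_eq p (m + l).
have Hr := ltn_pmod p HK.
set i0 := p %/ (m + l) in Ediv *; set r := p %% (m + l) in Ediv Hr *.
case: (ltngtP r m) => Hrm; last by exists i0; lia.
- have Hi0 : i0 < N by rewrite Hsz in Hp; nia.
  have [_ Hocc] := cw_bprop Hcw Hi0.
  exfalso; apply: (@occ_third _ x0 sigma m l Hsl Hl5 Hlm _ (r + l) (cw_bsize Hcw Hi0) Hocc); [lia|lia|lia|].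
  move=> k Hkl; rewrite -Hk // (cw_LW x0 Hsl Hl5 Hlm Hcw HN Hi0); [|lia|nia|nia].
  congr nth; lia.
- have Hi0 : i0.+1 < N by rewrite Hsz in Hp; nia.
  have [_ Hocc] := cw_bprop Hcw Hi0.
  exfalso; apply: (@occ_third _ x0 sigma m l Hsl Hl5 Hlm _ (r - m) (cw_bsize Hcw Hi0) Hocc); [lia|lia|lia|].
  move=> k Hkl; rewrite -Hk // (cw_LW x0 Hsl Hl5 Hlm Hcw HN Hi0); [|lia|nia|nia].
  congr nth; nia.
Qed.

Lemma cw_irr : irreducible x.
Proof.
move=> [u [a [w [Ha Hx]]]].
have [Hsz _ _] := cw_facts x0 Hsl Hcw HN.
have HK : 0 < m + l by lia.
set s := size u.
have Hsx : s + size (a ++ a) <= size x by rewrite Hx /s !size_cat; lia.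
have Hnth : forall k, k < size (a ++ a) -> nth x0 x (s + k) = nth x0 (a ++ a) k.
  move=> k Hk; rewrite Hx nth_catR catA nth_cat Hk //.
have Hta : size (a ++ a) <= 6 by rewrite size_cat; lia.
have Ediv := divn_eq s (m + l).
have Hr := ltn_pmod s HK.
set i0 := s %/ (m + l) in Ediv *; set r := s %% (m + l) in Ediv Hr *.
have [i [Hi [o [Ho1 Ho2]]]] : exists i, i < N /\ exists o, o + size (a ++ a) <= l + m + l /\
    forall k, k < size (a ++ a) -> nth x0 (sigma ++ nth [::] bs i ++ sigma) (o + k) = nth x0 x (s + k).
  case: (ltnP r m) => Hrm.
  - have Hi0 : i0 < N by rewrite Hsz in Hsx; nia.
    exists i0; split => //; exists (r + l); split; first lia.
    move=> k Hk; rewrite (cw_LW x0 Hsl Hl5 Hlm Hcw HN Hi0); [|lia|nia|nia].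
    congr nth; lia.
  - have Hi0 : i0.+1 < N.
      apply: (@lt_mulK _ _ (m + l)); rewrite Hsz size_cat in Hsx; rewrite mulSn; lia.
    exists i0.+1; split => //; exists (r - m); split; first lia.
    move=> k Hk; rewrite (cw_LW x0 Hsl Hl5 Hlm Hcw HN Hi0); [|lia|nia|nia].
    congr nth; nia.
have [Hirr _] := cw_bprop Hcw Hi.
apply: Hirr; exists (take o (sigma ++ nth [::] bs i ++ sigma)), a,
  (drop (o + size (a ++ a)) (sigma ++ nth [::] bs i ++ sigma)); split => //.
have E := @sub_split _ x0 (sigma ++ nth [::] bs i ++ sigma) (a ++ a) o.
rewrite -catA in E; apply: E.
  by rewrite !size_cat Hsl (cw_bsize Hcw Hi) -size_cat; lia.
by move=> k Hk; rewrite Ho2 // Hnth.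
Qed.

End CW3.


Lemma modK_eq i j K a b : i * K + a = j * K + b -> a < K -> b < K -> a = b.
Proof.
move=> E Ha Hb; have := congr1 (fun z => z %% K) E => /=.
by rewrite !modnMDl !modn_small.
Qed.

Section Arith.
Variables (m l : nat).
Hypothesis Hl5 : 5 <= l.
Hypothesis Hlm : l < m.

Definition fb s := if s %% (m + l) < m then s %/ (m + l) else (s %/ (m + l)).+1.

Lemma fb_bound s e k i p : s <= p -> p < e -> i * (m + l) <= p -> p < i * (m + l) + m ->
  e + m <= s + k * (m + l) -> fb s <= i < fb s + k.
Proof.
move=> H1 H2 H3 H4 H5.
have HK : 0 < m + l by lia.
have Ediv := divn_eq s (m + l).
have Hr := ltn_pmod s HK.
rewrite /fb; set i0 := s %/ (m + l) in Ediv *; set r := s %% (m + l) in Ediv Hr *.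
case: ifP => Hrm; apply/andP; split.
- rewrite -ltnS; apply: (@lt_mulK _ _ (m + l)); rewrite mulSn; lia.
- apply: (@lt_mulK _ _ (m + l)); rewrite mulnDl; lia.
- apply: (@lt_mulK _ _ (m + l)); lia.
- apply: (@lt_mulK _ _ (m + l)); rewrite mulnDl mulSn; lia.
Qed.

Lemma sep_find s e N : s + m + 2 * l <= e + 1 -> e <= N * (m + l) - l ->
  exists i, [/\ i.+1 < N, s <= i * (m + l) + m & i * (m + l) + m + l <= e].
Proof.
move=> H1 H2.
have HK : 0 < m + l by lia.
have Ediv := divn_eq s (m + l).
have Hr := ltn_pmod s HK.
set i0 := s %/ (m + l) in Ediv *; set r := s %% (m + l) in Ediv Hr *.
case: (leqP r m) => Hrm.
- exists i0; split; [|lia|lia].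
  apply: (@lt_mulK _ _ (m + l)); rewrite mulSn; lia.
- exists i0.+1; split; [|rewrite mulSn; lia|rewrite mulSn; lia].
  apply: (@lt_mulK _ _ (m + l)); rewrite !mulSn; lia.
Qed.

End Arith.


Lemma mem4 (a i : nat) : a <= i < a + 4 -> i \in [:: a; a.+1; a.+2; a.+3].
Proof. rewrite !inE. lia. Qed.
Lemma mem22 (a b i : nat) : (a <= i < a + 2) \/ (b <= i < b + 2) -> i \in [:: a; a.+1; b; b.+1].
Proof. rewrite !inE. lia. Qed.

Section Core.
Variables (T : eqType) (x0 : T) (sigma : seq T) (m l : nat).
Hypothesis Hsl : size sigma = l.
Hypothesis Hl5 : 5 <= l.
Hypothesis Hlm : l < m.
Variables (x1 x2 : seq T) (bs1 bs2 : seq (seq T)) (N : nat).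
Hypothesis Hcw1 : cwP sigma m x1 bs1 N.
Hypothesis Hcw2 : cwP sigma m x2 bs2 N.
Hypothesis HN : 0 < N.
Variables (r U1 V1 Z1 W1 U2 V2 Z2 W2 : seq T).
Hypothesis Hr1 : r = U1 ++ Z1 ++ W1.
Hypothesis Hx1 : x1 = U1 ++ V1 ++ W1.
Hypothesis Hr2 : r = U2 ++ Z2 ++ W2.
Hypothesis Hx2 : x2 = U2 ++ V2 ++ W2.
Hypothesis HV1 : size V1 < m.
Hypothesis HZ1 : size Z1 < m.
Hypothesis HV2 : size V2 < m.
Hypothesis HZ2 : size Z2 < m.
Hypothesis Ha12 : size U1 <= size U2.

Lemma pre_eq (U V W Z : seq T) p : p < size U ->
  nth x0 (U ++ V ++ W) p = nth x0 (U ++ Z ++ W) p.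
Proof. by move=> H; rewrite !nth_cat H. Qed.

Lemma suf_eq (U V W Z : seq T) p : size U + size V <= p ->
  nth x0 (U ++ V ++ W) p = nth x0 (U ++ Z ++ W) (size U + size Z + (p - size U - size V)).
Proof.
move=> H; set k := p - size U - size V.
have E : p = size (U ++ V) + k by rewrite size_cat /k; lia.
by rewrite {1}E catA nth_catR catA -size_cat nth_catR.
Qed.

Lemma core : exists a b, forall i, i < N -> nth [::] bs1 i != nth [::] bs2 i ->
  i \in [:: a; a.+1; b; b.+1].
Proof.
have [Hsz1 Hblk1 Hsep1] := cw_facts x0 Hsl Hcw1 HN.
have [Hsz2 Hblk2 Hsep2] := cw_facts x0 Hsl Hcw2 HN.
have Hsz : size x1 = size x2 by rewrite Hsz1 Hsz2.
have Sx1 : size x1 = size U1 + size V1 + size W1 by rewrite Hx1 !size_cat; lia.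
have Sx2 : size x2 = size U2 + size V2 + size W2 by rewrite Hx2 !size_cat; lia.
have Sr : size U1 + size Z1 + size W1 = size U2 + size Z2 + size W2.
  by rewrite -!addnA -!size_cat -Hr1 -Hr2.
have D : forall p, nth x0 x1 p != nth x0 x2 p -> size U1 <= p < maxn (size U1 + size V1) (size U2 + size V2).
  move=> p Hne; case: (ltnP p (size U1)) => Hp.
    move/eqP: Hne; case.
    by rewrite Hx1 Hx2 (@pre_eq U1 V1 W1 Z1) // (@pre_eq U2 V2 W2 Z2); [rewrite -Hr1 -Hr2|lia].
  case: (ltnP p (maxn (size U1 + size V1) (size U2 + size V2))) => Hp'; first by apply/andP.
  move: Hp'; rewrite geq_max => /andP [Hp1 Hp2].
  move/eqP: Hne; case.
  rewrite Hx1 Hx2 (@suf_eq U1 V1 W1 Z1) // (@suf_eq U2 V2 W2 Z2) // -Hr1 -Hr2.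
  by congr nth; lia.
have Bk : forall i, i < N -> nth [::] bs1 i != nth [::] bs2 i ->
    exists2 j, j < m & nth x0 x1 (i * (m + l) + j) != nth x0 x2 (i * (m + l) + j).
  move=> i Hi Hne; case: (classic (exists2 j, j < m & nth x0 x1 (i * (m + l) + j) != nth x0 x2 (i * (m + l) + j))) => // Hno.
  exfalso; move/eqP: Hne; apply; apply: (@eq_from_nth _ x0).
    by rewrite (cw_bsize Hcw1 Hi) (cw_bsize Hcw2 Hi).
  rewrite (cw_bsize Hcw1 Hi) => j Hj; rewrite -Hblk1 // -Hblk2 //.
  by apply/eqP; apply: contraT => Hc; exfalso; apply: Hno; exists j.
have HK : 0 < m + l by lia.
case: (ltnP (size U2).+1 (size U1 + size Z1 + m + 2 * l)) => Hcase.
- exists (fb m l (size U1)), (fb m l (size U1)).+2 => i Hi Hne.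
  have [j Hj Hd] := Bk i Hi Hne.
  have /andP [Hd1 Hd2] := D _ Hd.
  apply: mem4; apply: (fb_bound Hl5 Hlm Hd1 Hd2); [lia|lia|].
  rewrite !mulSn; lia.
- have [i' [Hi' Hs1 Hs2]] : exists i, [/\ i.+1 < N, size U1 + size Z1 <= i * (m + l) + m & i * (m + l) + m + l <= size U2].
    apply: (sep_find Hl5 Hlm); first lia.
    rewrite -Hsz2 Sx2; lia.
  set j0 := i' * (m + l) + m in Hs1 Hs2.
  have [i'' Hj1] : exists i'', j0 + size V1 - size Z1 = i'' * (m + l) + m.
    apply: (@occ_pos _ x0 _ _ _ Hsl Hl5 Hlm _ _ _ Hcw1 HN); first lia.
    move=> k Hk.
    rewrite Hx1 (@suf_eq U1 V1 W1 Z1); last lia.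
    rewrite -Hr1 Hr2.
    have -> : size U1 + size Z1 + (j0 + size V1 - size Z1 + k - size U1 - size V1) = j0 + k by lia.
    rewrite -(@pre_eq U2 V2 W2 Z2); last lia.
    by rewrite -Hx2 /j0 Hsep2.
  have Hvz : size V1 = size Z1.
    apply: (@modK_eq i' i'' (m + l)); lia.
  exists (fb m l (size U1)), (fb m l (size U2)) => i Hi Hne.
  have [j Hj Hd] := Bk i Hi Hne.
  have /andP [Hd1 Hd2] := D _ Hd.
  apply: mem22.
  case: (ltnP (i * (m + l) + j) (size U1 + size V1)) => Hw1.
    left; apply: (fb_bound Hl5 Hlm Hd1 Hw1); [lia|lia|rewrite !mulSn; lia].
  case: (ltnP (i * (m + l) + j) (size U2)) => Hw2.
    exfalso; move/eqP: Hd; apply.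
    rewrite Hx1 (@suf_eq U1 V1 W1 Z1) // -Hr1 Hr2 Hx2 (@pre_eq U2 V2 W2 Z2) //.
    by congr nth; lia.
  right; apply: (fb_bound Hl5 Hlm Hw2 (e := size U2 + size V2)); [lia|lia|lia|rewrite !mulSn; lia].
Qed.
End Core.


Lemma card_val_sub N (A : {set 'I_N}) (s : seq nat) :
  (forall i, i \in A -> val i \in s) -> #|A| <= size s.
Proof.
move=> H; rewrite cardE -(size_map val); apply: uniq_leq_size.
  by rewrite map_inj_uniq ?enum_uniq //; apply: val_inj.
by move=> z /mapP [i]; rewrite mem_enum => /H Hi ->.
Qed.

Section Win.
Variables (q L : nat).
Hypothesis HL : L_prop L.

Lemma window (x y r : seq 'I_q) : irreducible x -> 1 < size x -> Dstar_le1 x y -> is_root r y ->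
  exists U V W Z, [/\ r = U ++ Z ++ W, x = U ++ V ++ W, size V <= L & size Z <= L].
Proof.
move=> Hirr Hsx Hxy Hr.
have Hxx : is_root x x by split => //; apply: Dstar_refl.
case: Hxy => [Hxy|Hxy]; last first.
  have [u [v [w [z [E1 [E2 [H1 H2]]]]]]] := HL Hxy Hxx Hr.
  by exists u, v, w, z.
have Hnc : nc x.
  case: x Hirr Hsx {Hxx Hxy} => [|a [|b w]] Hirr // _.
  exists a, b; split; rewrite ?inE ?eqxx ?orbT //.
  apply/negP => /eqP Eab; apply: Hirr; exists [::], [:: a], w; split => //.
  by rewrite Eab.
have [u [b [a [w [Hba Ey]]]]] := nc_adj (nc_Dstar Hxy Hnc).
set y' := u ++ b :: a :: a :: w.
set y'' := u ++ b :: b :: a :: w.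
have Htd1 : td y y'.
  exists (u ++ [:: b]), [:: a], w; split => //; split; by rewrite ?Ey /y' -catA.
have Htd2 : td y y''.
  exists u, [:: b], (a :: w); split => //; split; by rewrite ?Ey.
have Hs : subst1 y' y''.
  exists (u ++ [:: b]), (a :: w), a, b; split; [by rewrite eq_sym|split; [by rewrite /y' -catA|by rewrite /y'' -catA]].
have H1 : Dstar1 x y''.
  exists y', y''; split; [exact: Dstar_step Hxy Htd1|split; [exact: Hs|exact: Dstar_refl]].
have H2 : is_root r y''.
  case: Hr => Hr1 Hr2; split => //; exact: Dstar_step Hr2 Htd2.
have [u' [v [w' [z [E1 [E2 [H3 H4]]]]]]] := HL H1 Hxx H2.
by exists u', v, w', z.
Qed.
End Win.

Unset Implicit Arguments. Set Strict Implicit.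

Theorem theorem3
  (q : nat) (Hq : 3 <= q) (l m : nat) (Hl : 5 <= l) (Hlm : l < m)
  (L : nat) (HL : is_Lcal L) (HmL : L < m)
  (sigma : seq 'I_q) (Hsl : size sigma = l) (Hsirr : irreducible sigma)
  (t : nat) (Ht : 0 < t) (HM : 2 ^ t <= Mcard sigma m)
  (F : finFieldType) (HF : #|F| = 2 ^ t)
  (zeta : F -> m.-tuple 'I_q) (Hzinj : injective zeta) (HzB : forall a, inB sigma (zeta a))
  (N : nat) (HN : N = 2 ^ t - 1)
  (C : {vspace 'rV[F]_N}) (HCdim : \dim C = N - 4)
  (HCd : forall c d, c \in C -> d \in C -> c != d -> 5 <= hamming c d)
  (HCd5 : exists c d, [/\ c \in C, d \in C & hamming c d = 5]) :
  (forall x1 x2, CMDS sigma zeta C x1 -> CMDS sigma zeta C x2 -> x1 <> x2 ->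
     forall y, ~ (Dstar_le1 x1 y /\ Dstar_le1 x2 y))
  /\
  (forall x1 x2 y1 y2 r, CMDS sigma zeta C x1 -> CMDS sigma zeta C x2 ->
     Dstar_le1 x1 y1 -> Dstar_le1 x2 y2 -> is_root r y1 -> is_root r y2 -> x1 = x2).
Proof.
have Hq0 : 0 < q by lia.
pose x0 : 'I_q := Ordinal Hq0.
have HN0 : 0 < N.
  case: HCd5 => c [d [_ _ H5]].
  have : hamming c d <= N.
    by rewrite /hamming; apply: (leq_trans (max_card _)); rewrite card_ord.
  lia.
pose bsOf := fun c : 'rV[F]_N => [seq tval (zeta (c ord0 i)) | i <- enum 'I_N].
have Hcw : forall x, CMDS sigma zeta C x ->
    exists2 c, c \in C & x = concat_sep sigma (bsOf c) /\ cwP sigma m x (bsOf c) N.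
  move=> x [c Hc Ex]; exists c => //; split => //; split => //.
  - by rewrite /bsOf size_map size_enum_ord.
  - by apply/allP => b /mapP [i _ ->]; rewrite size_tuple.
  - by move=> b /mapP [i _ ->]; exact: HzB.
have Hnth : forall (c : 'rV[F]_N) (i : 'I_N), nth [::] (bsOf c) i = tval (zeta (c ord0 i)).
  by move=> c i; rewrite /bsOf (nth_map i) ?size_enum_ord // nth_ord_enum.
have Hsize : forall x bs, cwP sigma m x bs N -> 1 < size x.
  move=> x bs H; have [Hs _ _] := cw_facts x0 Hsl H HN0; rewrite Hs; nia.
have Main : forall x1 x2 y1 y2 r, CMDS sigma zeta C x1 -> CMDS sigma zeta C x2 ->
     Dstar_le1 x1 y1 -> Dstar_le1 x2 y2 -> is_root r y1 -> is_root r y2 -> x1 = x2.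
  move=> x1 x2 y1 y2 r H1 H2 Hy1 Hy2 Hr1 Hr2.
  have [c1 Hc1 [E1 Hcw1]] := Hcw _ H1.
  have [c2 Hc2 [E2 Hcw2]] := Hcw _ H2.
  have Hirr1 := cw_irr x0 Hsl Hl Hlm Hcw1 HN0.
  have Hirr2 := cw_irr x0 Hsl Hl Hlm Hcw2 HN0.
  have [U1 [V1 [W1 [Z1 [Er1 Ex1 HV1 HZ1]]]]] := window HL.1 Hirr1 (Hsize _ _ Hcw1) Hy1 Hr1.
  have [U2 [V2 [W2 [Z2 [Er2 Ex2 HV2 HZ2]]]]] := window HL.1 Hirr2 (Hsize _ _ Hcw2) Hy2 Hr2.
  have [a [b Hab]] : exists a b, forall i, i < N -> nth [::] (bsOf c1) i != nth [::] (bsOf c2) i ->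
      i \in [:: a; a.+1; b; b.+1].
    case: (leqP (size U1) (size U2)) => Hle.
      exact: (core x0 Hsl Hl Hlm Hcw1 Hcw2 HN0 Er1 Ex1 Er2 Ex2 (leq_ltn_trans HV1 HmL) (leq_ltn_trans HZ1 HmL) (leq_ltn_trans HV2 HmL) (leq_ltn_trans HZ2 HmL) Hle).
    have [a [b Hab]] : exists a b, forall i, i < N -> nth [::] (bsOf c2) i != nth [::] (bsOf c1) i ->
      i \in [:: a; a.+1; b; b.+1].
      exact: (core x0 Hsl Hl Hlm Hcw2 Hcw1 HN0 Er2 Ex2 Er1 Ex1 (leq_ltn_trans HV2 HmL) (leq_ltn_trans HZ2 HmL) (leq_ltn_trans HV1 HmL) (leq_ltn_trans HZ1 HmL) (ltnW Hle)).
    by exists a, b => i Hi Hne; apply: Hab => //; rewrite eq_sym.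
  have Hc : c1 = c2.
    apply/eqP; apply: contraT => Hne.
    have := HCd _ _ Hc1 Hc2 Hne.
    have : hamming c1 c2 <= 4.
      rewrite /hamming; apply: (@card_val_sub _ _ [:: a; a.+1; b; b.+1]) => i; rewrite inE => Hi.
      apply: Hab; first exact: ltn_ord.
      change (nth [::] (bsOf c1) i != nth [::] (bsOf c2) i); rewrite !Hnth; apply: contra Hi => /eqP /val_inj /Hzinj ->.
      exact: eqxx.
    lia.
  by rewrite E1 E2 Hc.
split; last exact: Main.
move=> x1 x2 H1 H2 Hne y [Hy1 Hy2].
have [r Hr] := root_exists y.
exact: Hne (Main _ _ _ _ _ H1 H2 Hy1 Hy2 Hr Hr).
Qed.
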